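(* Let $\Gamma$ be a non-trivial finite group and let $G=\Gamma^\omega$, the countable product of copies of $\Gamma$, equipped with the product topology (each factor discrete) and its normalized Haar measure. Then $G$ has $2^{\mathfrak c}$ distinct dense subgroups that are not Haar measurable, where $\mathfrak c=2^{\aleph_0}$.
   Context: Haar measurability refers to the completed normalized Haar measure on the compact group $G$. *)

(* Defs.v *)
From HB Require Import structures.
From mathcomp Require Import all_boot all_order all_algebra all_fingroup.
From mathcomp Require Import all_classical all_reals all_analysis.

Set Implicit Arguments.
Unset Strict Implicit.
Unset Printing Implicit Defensive.

Import Order.TTheory GRing.Theory Num.Theory.
Local Open Scope classical_set_scope.

Definition cantor_group (gT : finGroupType) : Type :=
  {ptws nat -> discrete_topology gT}.

Section CantorGroup.
Variable gT : finGroupType.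
Local Notation G := (cantor_group gT).

Definition gmul (x y : G) : G := fun i => (x i * y i)%g.
Definition ginv (x : G) : G := fun i => ((x i)^-1)%g.
Definition gone : G := fun _ => 1%g.

Definition is_subgroup (H : set G) : Prop :=
  H gone /\ (forall x y, H x -> H y -> H (gmul x y)) /\
  (forall x, H x -> H (ginv x)).

Definition borel_set (B : set G) : Prop := <<s (@open G) >> B.

(** Basic cylinder: all x agreeing with w on the first n coordinates.
    Its normalized Haar measure is |Gamma|^(-n). *)
Definition cylinder (n : nat) (w : G) : set G :=
  [set x | forall i, (i < n)%N -> x i = w i].

Definition cylinder_measure (n : nat) : rat :=
  (((#|gT| ^ n)%N)%:R)^-1.

(** Null sets for the (outer) normalized Haar measure: for every eps = 1/(k+1)
    the set is covered by countably many cylinders of total measure <= eps. *)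
Definition haar_null (N : set G) : Prop :=
  forall k : nat, exists (ns : nat -> nat) (ws : nat -> G),
    N `<=` \bigcup_i cylinder (ns i) (ws i) /\
    forall m : nat, (\sum_(i < m) cylinder_measure (ns i) <= (k.+1%:R)^-1)%R.

(** Measurable for the completed normalized Haar measure: differs from a
    Borel set by a null set. *)
Definition haar_measurable (A : set G) : Prop :=
  exists B, borel_set B /\ haar_null ((A `\` B) `|` (B `\` A)).

End CantorGroup.

(* Main.v *)
From HB Require Import structures.
From mathcomp Require Import all_boot all_order all_algebra all_fingroup.
From mathcomp Require Import all_classical all_reals all_analysis.
From mathcomp Require Import ring lra.
From mathcomp Require Import Rstruct.
Require Import Defs.

Module M1.
Set Implicit Arguments. Unset Strict Implicit. Unset Printing Implicit Defensive.
Import Order.TTheory GRing.Theory Num.Theory.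
Local Open Scope classical_set_scope.

Definition CT (gT : finGroupType) := nat -> gT.
HB.instance Definition _ (gT : finGroupType) := Choice.on (CT gT).
HB.instance Definition _ (gT : finGroupType) := isPointed.Build (CT gT) (fun _ => 1%g).

Section Count.
Variable gT : finGroupType.
Local Notation CT := (CT gT).

Definition Det n (A : set CT) := forall x y : CT,
  (forall i, (i < n)%N -> x i = y i) -> A x -> A y.

Definition ext n (u : {ffun 'I_n -> gT}) : CT :=
  fun i => if @insub _ (fun k => (k < n)%N) _ i is Some j then u j else 1%g.

Lemma ext_lt n (u : {ffun 'I_n -> gT}) i (H : (i < n)%N) : ext u i = u (Ordinal H).
Proof. by rewrite /ext insubT. Qed.

Lemma ext_ge n (u : {ffun 'I_n -> gT}) i : (n <= i)%N -> ext u i = 1%g.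
Proof. by move=> H; rewrite /ext insubF // ltnNge H. Qed.

Definition cnt n (A : set CT) : nat := (\sum_(u : {ffun 'I_n -> gT}) `[< A (ext u) >])%N.

Lemma DetW n m A : (n <= m)%N -> Det n A -> Det m A.
Proof. by move=> nm D x y H; apply: D => i ilt; apply: H; exact: leq_trans ilt nm. Qed.

Lemma cntS n A : Det n A -> cnt n.+1 A = (#|gT| * cnt n A)%N.
Proof.
move=> D.
pose h (p : {ffun 'I_n -> gT} * gT) : {ffun 'I_n.+1 -> gT} :=
  [ffun i => if unlift ord_max i is Some j then p.1 j else p.2].
pose k (u : {ffun 'I_n.+1 -> gT}) := ([ffun j => u (lift ord_max j)], u ord_max).
have hK : cancel k h.
  move=> u; apply/ffunP => i; rewrite ffunE /=.
  by case: unliftP => [j ->|->]; rewrite ?ffunE.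
have kK : cancel h k.
  move=> [v a]; rewrite /k /h /= ffunE unlift_none; congr (_, _).
  by apply/ffunP => j; rewrite !ffunE liftK.
rewrite /cnt (reindex h); last by exists k => x _; [exact: kK|exact: hK].
transitivity (\sum_(v : {ffun 'I_n -> gT}) \sum_(a : gT) `[< A (ext (h (v, a))) >])%N.
  by rewrite pair_big; apply: eq_bigr => -[].
rewrite big_distrr /=; apply: eq_bigr => v _.
rewrite -sum_nat_const; apply: eq_bigr => a _.
suff E : A (ext (h (v, a))) <-> A (ext v).
  by case: (asboolP (A (ext v))) => H; [rewrite asboolT //; apply/E|rewrite asboolF // => /E].
have agr : forall i, (i < n)%N -> ext (h (v, a)) i = ext v i.
  move=> i ilt; have ilt' : (i < n.+1)%N by exact: ltnW.
  rewrite (ext_lt _ ilt') (ext_lt _ ilt) ffunE.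
  have -> : Ordinal ilt' = lift ord_max (Ordinal ilt) by apply: val_inj; rewrite /= /bump leqNgt ilt.
  by rewrite liftK.
split; apply: D => i ilt; [|symmetry]; exact: agr.
Qed.
End Count.

End M1.
Import M1.

Module M2.
Set Implicit Arguments. Unset Strict Implicit. Unset Printing Implicit Defensive.
Import Order.TTheory GRing.Theory Num.Theory.
Local Open Scope classical_set_scope.

Section Topo.
Variable gT : finGroupType.
Local Notation G := (cantor_group gT).

Lemma cylinderS n (w : G) :
  cylinder n.+1 w = cylinder n w `&` ((fun x : G => x n) @^-1` [set w n]).
Proof.
apply/seteqP; split => x /=.
  by move=> H; split; [move=> i ilt; apply: H; exact: ltnW|apply: H].
move=> [H1 H2] i; rewrite ltnS leq_eqVlt => /orP[/eqP ->|]; [exact: H2|exact: H1].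
Qed.

Lemma open_cylinder n (w : G) : open (cylinder n w).
Proof.
elim: n => [|n IH].
  have -> : cylinder 0 w = setT by apply/seteqP; split => x //=.
  exact: openT.
rewrite cylinderS; apply: openI => //.
apply: open_comp; last exact: discrete_open.
move=> x _; exact: (@proj_continuous nat (fun _ => discrete_topology gT) n).
Qed.

Lemma cylinder_refl n (x : G) : cylinder n x x.
Proof. by []. Qed.

Lemma open_Det n (A : set G) : Det n A -> open A.
Proof.
move=> D; rewrite (_ : A = \bigcup_(x in A) cylinder n x).
  by apply: bigcup_open => x _; exact: open_cylinder.
apply/seteqP; split => [x Ax|y [x Ax cy]]; first by exists x.
by apply: (D x) => // i /cy.
Qed.

Lemma Det_compl n (A : set G) : Det n A -> Det n (~` A).
Proof.
move=> D x y H nAx Ay; apply: nAx; apply: (D y) => // i ilt; symmetry; exact: H.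
Qed.

Lemma closed_Det n (A : set G) : Det n A -> closed A.
Proof. by move=> D; rewrite -openC; apply: open_Det (Det_compl D). Qed.

Lemma cg_compactT : compact [set: G].
Proof.
have := @tychonoff nat (fun _ => discrete_topology gT) (fun _ => setT)
  (fun _ => @finite_compact (discrete_topology gT) setT (@finite_finset gT setT)).
by congr (compact _); apply/seteqP; split.
Qed.

Lemma open_cyl_sub (O : set G) x : open O -> O x -> exists n, cylinder n x `<=` O.
Proof.
move=> oO Ox; apply: contrapT => nE.
have H : forall n, exists y, cylinder n x y /\ ~ O y.
  move=> n; apply: contrapT => nH; apply: nE; exists n => y cy.
  by apply: contrapT => nOy; apply: nH; exists y.
have [y Hy] := choice H.
have cv : y @ \oo --> (x : G).
  apply/(@pointwise_cvgP nat (discrete_topology gT)) => t.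
  apply/discrete_cvg; exists t.+1 => // n /= tn.
  exact: (proj1 (Hy n)) t tn.
have : \forall n \near \oo, O (y n).
  by apply: cv; apply: open_nbhs_nbhs; rewrite /open_nbhs; exact: (conj oO Ox).
move=> [N _ HN]; apply: (proj2 (Hy N)); exact: (HN N (leqnn N)).
Qed.

End Topo.

End M2.
Import M2.

Module M3.
Set Implicit Arguments. Unset Strict Implicit. Unset Printing Implicit Defensive.
Import Order.TTheory GRing.Theory Num.Theory.
Local Open Scope classical_set_scope.

Definition PG (gT : finGroupType) := cantor_group gT.
HB.instance Definition _ (gT : finGroupType) := Topological.on (PG gT).
HB.instance Definition _ (gT : finGroupType) := isPointed.Build (PG gT) (fun _ => 1%g).

Section Fin.
Variable gT : finGroupType.
Local Notation G := (cantor_group gT).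

Lemma det_fin (F : nat -> set G) n0 : (forall i, exists n, Det n (F i)) ->
  Det n0 (\bigcup_i F i) -> trivIset setT F ->
  exists N, forall k, (N <= k)%N -> F k = set0.
Proof.
move=> DF DU tF.
have cU : compact (\bigcup_i F i : set (PG gT)).
  apply: (subclosed_compact _ (@cg_compactT gT)) => //.
  exact: (closed_Det DU).
rewrite compact_cover in cU.
have [D' _ sub] := cU nat setT F (fun i _ => let: ex_intro n Dn := DF i in open_Det Dn)
  (fun x Ux => Ux).
exists (\max_(i <- finmap.enum_fset D') i).+1 => k Nk.
apply/seteqP; split => // x Fkx.
have [i D'i Fix] := sub x (ex_intro2 _ _ k I Fkx).
have ik : i = k by apply: tF => //; exists x.
have : (i <= \max_(i <- finmap.enum_fset D') i)%N by apply: (@leq_bigmax_seq _ _ _ (fun i => i)).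
by rewrite ik leqNgt Nk.
Qed.
End Fin.

End M3.
Import M3.

Module M4.
Set Implicit Arguments. Unset Strict Implicit. Unset Printing Implicit Defensive.
Import Order.TTheory GRing.Theory Num.Theory.
Local Open Scope classical_set_scope.

Definition detm (gT : finGroupType) (A : set (CT gT)) := exists n, Det n A.

Lemma detm0 (gT : finGroupType) : detm (set0 : set (CT gT)).
Proof. by exists 0%N. Qed.

Lemma detmU (gT : finGroupType) : setU_closed (@detm gT).
Proof.
move=> A B [n DA] [m DB]; exists (maxn n m) => x y H [Ax|By].
  by left; apply: (DetW (leq_maxl n m) DA) Ax.
by right; apply: (DetW (leq_maxr n m) DB) By.
Qed.

Lemma detmC (gT : finGroupType) : setC_closed (@detm gT).
Proof.
move=> A [n D]; exists n => x y H nAx Ay; apply: nAx; apply: (D y) => // i ilt.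
by symmetry; apply: H.
Qed.

HB.instance Definition _ (gT : finGroupType) :=
  @isAlgebraOfSets.Build default_measure_display (CT gT) (@detm gT)
    (@detm0 gT) (@detmU gT) (@detmC gT).

Section Content.
Local Open Scope ring_scope.
Variable gT : finGroupType.
Variable R : realType.
Local Notation CT := (CT gT).
Local Notation q := #|gT|.

Lemma q_gt0 : (0 < q)%N.
Proof. by apply/card_gt0P; exists 1%g. Qed.

Lemma cnt_add n k (A : set CT) : Det n A -> cnt (n + k) A = (q ^ k * cnt n A)%N.
Proof.
move=> D; elim: k => [|k IH]; first by rewrite addn0 expn0 mul1n.
by rewrite addnS cntS ?IH ?expnS ?mulnA //; apply: DetW D; exact: leq_addr.
Qed.

Definition ratio n (A : set CT) : R := (cnt n A)%:R / (q ^ n)%:R.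

Lemma ratio_eq n m (A : set CT) : Det n A -> Det m A -> ratio n A = ratio m A.
Proof.
have qn0 k : (q ^ k)%:R != 0 :> R by rewrite pnatr_eq0 -lt0n expn_gt0 q_gt0.
wlog nm : n m / (n <= m)%N.
  move=> W Dn Dm; case: (leqP n m) => H; first exact: W.
  by symmetry; apply: W => //; exact: ltnW.
move=> Dn _; rewrite -(subnKC nm) /ratio cnt_add // expnD !natrM.
field; by rewrite ?qn0 // mulf_neq0.
Qed.

Definition lvl (A : set CT) : nat := xget 0%N [set n | Det n A].

Definition m0 (A : set CT) : \bar R := (ratio (lvl A) A)%:E.

Lemma m0E n (A : set CT) : Det n A -> m0 A = (ratio n A)%:E.
Proof.
move=> D; rewrite /m0 /lvl; case: xgetP => [k -> Dk|/(_ n) //].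
by rewrite (ratio_eq Dk D).
Qed.

Lemma ratio_ge0 n A : 0 <= ratio n A.
Proof. by rewrite /ratio divr_ge0. Qed.

Lemma disj_sum (P : nat -> Prop) m :
  (forall i j, P i -> P j -> i = j) -> (forall i, (m <= i)%N -> ~ P i) ->
  (\sum_(i < m) `[< P i >])%N = `[< exists i, P i >].
Proof.
move=> dP bP; elim: m bP => [|m IH] bP.
  rewrite big_ord0 asboolF // => -[i Pi]; exact: (bP i (leq0n i)).
rewrite big_ord_recr /=; case: (asboolP (P m)) => Pm.
  rewrite asboolT; last by exists m.
  rewrite big1 // => i _; rewrite asboolF // => Pi.
  by have := dP _ _ Pi Pm => ieq; have := ltn_ord i; rewrite ieq ltnn.
rewrite addn0 IH // => i; rewrite leq_eqVlt => /orP[/eqP <- //|]; exact: bP.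
Qed.

Lemma m0_sigma : semi_sigma_additive m0.
Proof.
move=> F mF tF mU.
have [n0 DU] := mU.
have [N FN] := det_fin mF DU tF.
have [n Dn] : exists n, forall i, Det n (F i).
  suff [n Dn] : exists n, forall i, (i < N)%N -> Det n (F i).
    exists n => i; case: (ltnP i N) => H; first exact: Dn.
    by rewrite FN // => x y _.
  elim: N {FN} => [|N [n Dn]]; first by exists 0%N.
  have [k Dk] := mF N; exists (maxn n k) => i; rewrite ltnS leq_eqVlt => /orP[/eqP ->|].
    exact: DetW (leq_maxr n k) Dk.
  move=> iN; exact: DetW (leq_maxl n k) (Dn i iN).
have DU' : Det n (\bigcup_k F k).
  move=> x y H [k _ Fkx]; exists k => //; exact: (Dn k x y H).
rewrite (m0E DU'); apply: cvg_near_cst; exists N => // m /= Nm.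
rewrite big_mkord; under eq_bigr do rewrite (m0E (Dn _)).
rewrite sumEFin /ratio -mulr_suml -natr_sum; congr ((_ / _)%:E); congr (_%:R).
rewrite /cnt exchange_big /=; apply: eq_bigr => u _.
rewrite (@disj_sum (fun i => F i (ext u)) m).
- congr (nat_of_bool (asbool _)); apply/propext; split => [[i Fi]|[i _ Fi]]; by exists i.
- by move=> i j Fi Fj; apply: tF => //; exists (ext u).
- move=> i mi; rewrite FN //; exact: leq_trans Nm mi.
Qed.

Lemma m00 : m0 set0 = 0.
Proof.
rewrite (@m0E 0%N) ?/ratio; last by move=> x y.
by rewrite /cnt big1 ?mul0r // => u _; rewrite asboolF.
Qed.

Lemma m0_ge0 A : (0 <= m0 A)%E.
Proof. by rewrite /m0 lee_fin ratio_ge0. Qed.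

HB.instance Definition _ := isMeasure.Build _ CT R m0 m00 m0_ge0 m0_sigma.

End Content.

End M4.
Import M4.

Module M5.
Set Implicit Arguments. Unset Strict Implicit. Unset Printing Implicit Defensive.
Import Order.TTheory GRing.Theory Num.Theory.
Local Open Scope classical_set_scope.
Local Open Scope ring_scope.

Definition MT (gT : finGroupType) := g_sigma_algebraType (@measurable _ (CT gT)).
Notation muG gT R := (@measure_extension _ (CT gT) R (@m0 gT R)).

Section Mu.
Variable gT : finGroupType.
Variable R : realType.
Local Notation q := #|gT|.
Local Notation MT := (MT gT).
Local Notation G := (cantor_group gT).

Local Notation mu := (muG gT R).

Lemma mT_det (A : set MT) : detm A -> measurable A.
Proof. by move=> D; apply: sub_sigma_algebra. Qed.

Lemma muE (A : set MT) : detm A -> mu A = @m0 gT R A.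
Proof. by move=> D; rewrite /measure_extension measurable_mu_extE. Qed.

Lemma ext_ord n (u : {ffun 'I_n -> gT}) (i : 'I_n) : ext u i = u i.
Proof. by rewrite (ext_lt u (ltn_ord i)); congr (u _); apply: val_inj. Qed.

Lemma Det_cyl n (w : G) : Det n (cylinder n w).
Proof. by move=> x y H cx i ilt; rewrite -(H i ilt); exact: cx i ilt. Qed.

Lemma cnt_cyl n (w : G) : cnt n (cylinder n w) = 1%N.
Proof.
pose w0 : {ffun 'I_n -> gT} := [ffun i : 'I_n => w i].
rewrite /cnt (bigD1 w0) //= big1 ?addn0.
  rewrite asboolT // => i ilt; rewrite (ext_lt _ ilt) ffunE //.
move=> u uw; rewrite asboolF // => H; move/eqP: uw; apply; apply/ffunP => i.
by rewrite ffunE -(H i (ltn_ord i)) ext_ord.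
Qed.

Lemma mu_cyl n (w : G) : mu (cylinder n w) = ((q ^ n)%:R^-1)%:E.
Proof.
rewrite muE; last by exists n; exact: Det_cyl.
by rewrite (m0E _ (@Det_cyl n w)) /ratio cnt_cyl mul1r.
Qed.

Lemma mu_setT : mu setT = 1%E.
Proof.
have -> : (setT : set MT) = cylinder 0 (fun _ => 1%g) by apply/seteqP; split.
by rewrite mu_cyl expn0 invr1.
Qed.

Lemma borel_meas (B : set G) : borel_set B -> measurable (B : set MT).
Proof.
apply: smallest_sub; first exact: sigma_algebra_measurable.
move=> O oO.
have -> : O = \bigcup_n [set x : G | cylinder n x `<=` O].
  apply/seteqP; split => [x Ox|x [n _ H]]; last by apply: H.
  by have [n Hn] := open_cyl_sub oO Ox; exists n.
apply: bigcupT_measurable => n; apply: mT_det; exists n => x y H /= cx z cz.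
apply: cx => i ilt; rewrite cz // H //.
Qed.

End Mu.

Section Null.
Variable gT : finGroupType.
Variable R : realType.
Local Notation q := #|gT|.
Local Notation MT := (MT gT).
Local Notation G := (cantor_group gT).
Local Notation mu := (muG gT R).

Lemma mu_ge0' (A : set MT) : (0 <= mu A)%E.
Proof. exact: measure_ge0. Qed.

Lemma small_zero (x : \bar R) : (0 <= x)%E -> (x <= 1)%E ->
  (forall k : nat, (x <= ((k.+1%:R)^-1)%:E)%E) -> x = 0%E.
Proof.
case: x => [r r0 r1 Hk|r0 r1 _|r0 _ _]; last 2 first.
- by move: r1; rewrite leye_eq.
- by move: r0; rewrite leeNy_eq.
move: r0; rewrite lee_fin => r0; congr (_%:E); apply/eqP; rewrite eq_le r0 andbT.
rewrite leNgt; apply/negP => rpos.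
have := Hk (Num.truncn r^-1); rewrite lee_fin.
rewrite -[r in (r <= _)]invrK ler_pV2; last 2 first.
- by rewrite inE unitfE gt_eqF ?invr_gt0 // invr_gt0.
- by rewrite inE unitfE pnatr_eq0 /= ltr0Sn.
by rewrite leNgt truncnS_gt.
Qed.

Lemma null_meas (N : set G) : haar_null N ->
  exists N' : set MT, measurable N' /\ N `<=` N' /\ mu N' = 0%E.
Proof.
move=> HN.
have [f Hf] : {f : nat -> (nat -> nat) * (nat -> G) & forall k,
    N `<=` \bigcup_i cylinder ((f k).1 i) ((f k).2 i) /\
    forall m : nat, (\sum_(i < m) cylinder_measure gT ((f k).1 i) <= (k.+1%:R)^-1)%R}.
  apply: (@choice _ _ (fun k (p : (nat -> nat) * (nat -> G)) =>
    N `<=` \bigcup_i cylinder (p.1 i) (p.2 i) /\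
    forall m : nat, (\sum_(i < m) cylinder_measure gT (p.1 i) <= (k.+1%:R)^-1)%R)).
  move=> k; have [ns [ws H]] := HN k; by exists (ns, ws).
pose C k : set MT := \bigcup_i cylinder ((f k).1 i) ((f k).2 i).
have mcyl n w : measurable (cylinder n w : set MT).
  by apply: mT_det; exists n; exact: Det_cyl.
have mC k : measurable (C k) by apply: bigcupT_measurable => i; exact: mcyl.
exists (\bigcap_k C k); split; first exact: bigcapT_measurable.
split; first by move=> x Nx k _; exact: (proj1 (Hf k)).
apply: small_zero; first exact: measure_ge0.
  by rewrite -(mu_setT gT R); apply: le_measure => //; rewrite inE //; exact: bigcapT_measurable.
move=> k.
apply: (@le_trans _ _ (mu (C k))).
  by apply: le_measure; rewrite ?inE //; [exact: bigcapT_measurable|exact: bigcap_inf].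
apply: le_trans (measure_sigma_subadditive _ (fun i => mcyl _ _) (mC k) (@subset_refl _ _)) _.
apply: lime_le; first by apply: is_cvg_nneseries => *; exact: measure_ge0.
apply: nearW => m /=; rewrite big_mkord.
under eq_bigr do rewrite mu_cyl.
rewrite sumEFin lee_fin.
have := (proj2 (Hf k)) m; rewrite -(ler_rat R) rmorph_sum fmorphV rmorph_nat => H.
apply: le_trans H; rewrite le_eqVlt; apply/orP; left; apply/eqP.
by apply: eq_bigr => i _; rewrite /cylinder_measure fmorphV rmorph_nat.
Qed.

End Null.

End M5.
Import M5.

Module M6.
Set Implicit Arguments. Unset Strict Implicit. Unset Printing Implicit Defensive.
Import Order.TTheory GRing.Theory Num.Theory.
Local Open Scope classical_set_scope.
Local Open Scope ring_scope.

Section Trans.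
Variable gT : finGroupType.
Variable R : realType.
Local Notation q := #|gT|.
Local Notation MT := (MT gT).
Local Notation G := (cantor_group gT).
Local Notation mu := (muG gT R).

Definition tau (z : G) : MT -> MT := fun x => gmul x z.

Lemma tau_Det z n (A : set MT) : Det n A -> Det n (tau z @^-1` A).
Proof.
move=> D x y H; apply: D => i ilt; by rewrite /tau /gmul /= (H i ilt).
Qed.

Lemma measT_eq : @measurable _ MT = <<s @measurable _ (CT gT) >>.
Proof. by []. Qed.

Lemma tau_meas z : measurable_fun setT (tau z).
Proof.
apply: (@measurability _ _ MT MT setT (tau z) _ measT_eq) => _ [A [n D] <-].
by rewrite setTI; apply: mT_det; exists n; exact: tau_Det.
Qed.

Lemma tau_measP z (A : set MT) : measurable A -> measurable (tau z @^-1` A).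
Proof. by move=> mA; rewrite -[X in measurable X]setTI; exact: tau_meas. Qed.

Lemma cnt_tau z n (A : set MT) : Det n A -> cnt n (tau z @^-1` A) = cnt n A.
Proof.
move=> D.
pose h (u : {ffun 'I_n -> gT}) : {ffun 'I_n -> gT} := [ffun i => (u i * z i)%g].
pose h' (u : {ffun 'I_n -> gT}) : {ffun 'I_n -> gT} := [ffun i => (u i * (z i)^-1)%g].
have hK : cancel h h' by move=> u; apply/ffunP => i; rewrite !ffunE mulgK.
rewrite /cnt [in RHS](reindex_inj (can_inj hK)) /=; apply: eq_bigr => u _.
suff E : A (tau z (ext u)) <-> A (ext (h u)).
  by case: (asboolP (A (ext (h u)))) => H; [rewrite asboolT //; apply/E|rewrite asboolF // => /E].
have agr : forall i, (i < n)%N -> tau z (ext u) i = ext (h u) i.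
  by move=> i ilt; rewrite /tau /gmul !(ext_lt _ ilt) ffunE.
split; apply: D => i ilt; [|symmetry]; exact: agr.
Qed.

Section TMu.
Variable z : G.
Definition tmu (A : set MT) : \bar R := mu (tau z @^-1` A).
Let tmu0 : tmu set0 = 0%E. Proof. by rewrite /tmu preimage_set0 measure0. Qed.
Let tmu_ge0 A : (0 <= tmu A)%E.
Proof. exact: measure_ge0. Qed.
Let tmu_sigma_additive : semi_sigma_additive tmu.
Proof.
move=> F mF tF mUF; rewrite /tmu preimage_bigcup.
apply: measure_semi_sigma_additive.
- by move=> n; exact: tau_measP.
- apply/trivIsetP => /= i j _ _ ij; rewrite -preimage_setI.
  by move/trivIsetP : tF => /(_ _ _ _ _ ij) ->//; rewrite preimage_set0.
- by rewrite -preimage_bigcup; exact: tau_measP.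
Qed.
HB.instance Definition _ := isMeasure.Build _ _ _ tmu tmu0 tmu_ge0 tmu_sigma_additive.
End TMu.

Lemma mu_tau z (A : set MT) : measurable A -> mu (tau z @^-1` A) = mu A.
Proof.
move=> mA.
apply: (@measure_unique _ R MT (@measurable _ (CT gT)) (fun _ => setT) measT_eq
  (@measurableI _ (CT gT)) _ _ (tmu z) mu) => //.
- by apply/seteqP; split => // x _; exists 0%N.
- move=> B [n D]; rewrite /tmu /= [RHS]muE; last by exists n.
  rewrite /tmu /= muE; last by exists n; exact: (tau_Det (z:=z) D).
  by rewrite (m0E _ D) (m0E _ (tau_Det (z:=z) D)) /ratio cnt_tau.
- move=> k; change (mu (tau z @^-1` setT) < +oo)%E; by rewrite preimage_setT mu_setT ltry.
Qed.

End Trans.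

End M6.
Import M6.

Module M7.
Set Implicit Arguments. Unset Strict Implicit. Unset Printing Implicit Defensive.
Import Order.TTheory GRing.Theory Num.Theory.
Local Open Scope classical_set_scope.
Local Open Scope ring_scope.

Section Part.
Variable gT : finGroupType.
Variable R : realType.
Local Notation q := #|gT|.
Local Notation MT := (MT gT).
Local Notation G := (cantor_group gT).
Local Notation mu := (muG gT R).

Lemma meas_cyl n (w : G) : measurable (cylinder n w : set MT).
Proof. by apply: mT_det; exists n; exact: Det_cyl. Qed.

Lemma mu_part (m : {measure set MT -> \bar R}) (D : set MT) n : measurable D ->
  m D = (\sum_(u : {ffun 'I_n -> gT}) m (D `&` cylinder n (ext u)))%E.
Proof.
move=> mD.
have eqD : D = \bigcup_(u in [set: {ffun 'I_n -> gT}]) (D `&` cylinder n (ext u)).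
  apply/seteqP; split => [x Dx|x [u _ [Dx _]] //].
  exists [ffun i : 'I_n => x i] => //; split => // i ilt.
  by rewrite (ext_lt _ ilt) ffunE.
rewrite {1}eqD measure_fin_bigcup //.
- rewrite (fsbigE (enum {ffun 'I_n -> gT})) ?enum_uniq //.
  under eq_bigl do rewrite in_setT.
  by rewrite big_enum; apply: eq_bigl.
  by move=> i _; rewrite mem_enum.
- exact: (@finite_finset {ffun 'I_n -> gT} setT).
- move=> u v _ _ [x [[_ cu] [_ cv]]]; apply/ffunP => i.
  by rewrite -!ext_ord -(cu i (ltn_ord i)) -(cv i (ltn_ord i)).
- by move=> u _; apply: measurableI => //; exact: meas_cyl.
Qed.

End Part.

End M7.
Import M7.

Module M8.
Set Implicit Arguments. Unset Strict Implicit. Unset Printing Implicit Defensive.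
Import Order.TTheory GRing.Theory Num.Theory.
Local Open Scope classical_set_scope.
Local Open Scope ring_scope.

Section NonMeas.
Variable gT : finGroupType.
Variable R : realType.
Local Notation q := #|gT|.
Local Notation MT := (MT gT).
Local Notation G := (cantor_group gT).
Local Notation mu := (muG gT R).

Definition finsupp (z : G) := exists n, forall i, (n <= i)%N -> z i = 1%g.

Variable H : set G.
Hypothesis hF3 : forall z : G, finsupp z -> forall x, H (gmul x z) <-> H x.

Variable B : set MT.
Hypothesis mB : measurable B.
Variable N0 : set MT.
Hypothesis mN0 : measurable N0.
Hypothesis muN0 : mu N0 = 0%E.
Hypothesis sN0 : (H `\` B) `|` (B `\` H) `<=` N0.

Lemma mu_le0 (A : set MT) : measurable A -> (mu A <= 0)%E -> mu A = 0%E.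
Proof. by move=> mA H0; apply/eqP; rewrite eq_le H0 measure_ge0. Qed.

Lemma muU0 (A N : set MT) : measurable A -> measurable N -> mu N = 0%E ->
  (mu (A `|` N) <= mu A)%E.
Proof.
move=> mA mN h; apply: le_trans (measureU2 mu mA mN) _.
rewrite -[X in (_ <= X)%E]adde0; apply: leeD => //.
by rewrite le_eqVlt; apply/orP; left; apply/eqP; exact: h.
Qed.

Lemma mu0U (A A' : set MT) : measurable A -> measurable A' -> mu A = 0%E -> mu A' = 0%E ->
  mu (A `|` A') = 0%E.
Proof.
move=> mA mA' h h'; apply: mu_le0; first exact: measurableU.
apply: le_trans (muU0 mA mA' h') _.
by rewrite le_eqVlt; apply/orP; left; apply/eqP; exact: h.
Qed.

Lemma eq_null (X Y N : set MT) : measurable X -> measurable Y -> measurable N ->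
  mu N = 0%E -> X `\` Y `<=` N -> Y `\` X `<=` N -> mu X = mu Y.
Proof.
move=> mX mY mN muN sXY sYX.
have le (X' Y' : set MT) : measurable X' -> measurable Y' -> X' `\` Y' `<=` N ->
    (mu X' <= mu Y')%E.
  move=> mX' mY' s; apply: (@le_trans _ _ (mu (Y' `|` N))); last exact: muU0.
  apply: le_measure; rewrite ?inE; [exact: mX'|exact: measurableU|].
  by move=> x X'x; case: (pselect (Y' x)) => Yx; [left|right; apply: s].
by apply/eqP; rewrite eq_le !le.
Qed.

Lemma tauB z (C : set MT) : finsupp z -> measurable C ->
  mu ((tau z @^-1` B) `&` C) = mu (B `&` C).
Proof.
move=> fz mC.
have mtB := tau_measP z mB; have mtN := tau_measP z mN0.
apply: (@eq_null _ _ (N0 `|` tau z @^-1` N0)).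
- exact: measurableI.
- exact: measurableI.
- exact: measurableU.
- by apply: mu0U => //; rewrite (@mu_tau _ R).
- move=> x [[Bxz Cx] nBC]; have nBx : ~ B x by move=> Bx; apply: nBC.
  case: (pselect (H x)) => Hx; first by left; apply: sN0; left.
  right; apply: sN0; right; split => //.
  by move/(hF3 fz).
- move=> x [[Bx Cx] nBC]; have nBx : ~ B (tau z x) by move=> Bx'; apply: nBC.
  case: (pselect (H x)) => Hx.
    by right; apply: sN0; left; split => //; apply/(hF3 fz).
  by left; apply: sN0; right.
Qed.

Definition zz n (w w' : G) : G :=
  fun i => if (i < n)%N then ((w i)^-1 * w' i)%g else 1%g.

Lemma claimE n (w w' : G) : mu (B `&` cylinder n w) = mu (B `&` cylinder n w').
Proof.
have fz : finsupp (zz n w w') by exists n => i ni; rewrite /zz ltnNge ni.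
have E : tau (zz n w w') @^-1` (cylinder n w' : set MT) = cylinder n w.
  apply/seteqP; split => x /= cx i ilt; move: (cx i ilt); rewrite /tau /gmul /zz ilt.
    move=> h; apply/eqP; rewrite eq_mulgV1; apply/eqP.
    by apply: (@mulIg _ (w' i)); rewrite -mulgA h mul1g.
  by move=> ->; rewrite mulgA mulgV mul1g.
rewrite -[RHS](@mu_tau _ R (zz n w w')); last by apply: measurableI => //; exact: meas_cyl.
by rewrite preimage_setI E tauB //; exact: meas_cyl.
Qed.

Lemma mu_fin (A : set MT) : measurable A -> mu A = (fine (mu A))%:E.
Proof.
move=> mA; rewrite fineK // ge0_fin_numE ?measure_ge0 //.
apply: (@le_lt_trans _ _ (mu setT)); last by rewrite mu_setT ltry.
by apply: le_measure; rewrite ?inE.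
Qed.

Lemma Det_cyl_sub n (C : set MT) (u : {ffun 'I_n -> gT}) : Det n C ->
  C (ext u) -> (cylinder n (ext u) : set MT) `<=` C.
Proof. by move=> D Cu x cx; apply: (D (ext u)) => // i ilt; rewrite cx. Qed.

Lemma Det_cyl_disj n (C : set MT) (u : {ffun 'I_n -> gT}) : Det n C ->
  ~ C (ext u) -> (cylinder n (ext u) : set MT) `&` C = set0.
Proof.
move=> D nCu; apply/seteqP; split => // x [cx Cx]; apply: nCu.
by apply: (D x) => // i ilt; rewrite cx.
Qed.

Lemma card_pref n : #|{ffun 'I_n -> gT}| = (q ^ n)%N.
Proof. by rewrite card_ffun card_ord. Qed.

Lemma claimC n (C : set MT) : Det n C -> mu (B `&` C) = ((fine (mu B))%:E * mu C)%E.
Proof.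
move=> D.
have mC : measurable C by apply: mT_det; exists n.
pose c := mu (B `&` cylinder n (fun _ => 1%g)).
have Ec u : mu (B `&` cylinder n (ext u)) = (fine c)%:E.
  by rewrite (claimE n (ext u) (fun _ => 1%g)) -mu_fin //; apply: measurableI => //; exact: meas_cyl.
have hB : mu B = ((q ^ n)%:R * fine c)%:E.
  rewrite (mu_part mu n mB).
  transitivity (\sum_(u : {ffun 'I_n -> gT}) (fine c)%:E)%E.
    by apply: eq_bigr => u _; exact: Ec.
  by rewrite sumEFin sumr_const card_pref mulr_natl.
have hBC : mu (B `&` C) = ((cnt n C)%:R * fine c)%:E.
  rewrite (mu_part mu n (measurableI _ _ mB mC)).
  transitivity (\sum_(u : {ffun 'I_n -> gT}) ((`[< C (ext u) >])%:R * fine c)%:E)%E.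
    apply: eq_bigr => u _; case: (asboolP (C (ext u))) => Cu.
      rewrite mul1r -(@Ec n u).
      have -> : B `&` C `&` cylinder n (ext u) = B `&` cylinder n (ext u).
        apply/seteqP; split => x; first by move=> [[Bx _] cx].
        by move=> [Bx cx]; split => //; split => //; apply: (Det_cyl_sub D Cu).
      by [].
    rewrite mul0r -setIA (setIC C) (Det_cyl_disj D Cu) setI0; exact: measure0.
  by rewrite sumEFin -mulr_suml /cnt natr_sum.
have hC : mu C = ((cnt n C)%:R / (q ^ n)%:R)%:E.
  by rewrite muE; [rewrite (m0E _ D)|exists n].
rewrite hBC hB hC /= -EFinM; congr (_%:E).
have qn0 : (q ^ n)%:R != 0 :> R by rewrite pnatr_eq0 -lt0n expn_gt0 q_gt0.
by field.
Qed.

Lemma fineB_ge0 : 0 <= fine (mu B).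
Proof. by apply: fine_ge0; exact: measure_ge0. Qed.

Lemma zero_one_all (C : set MT) : measurable C ->
  mu (C `&` B) = ((fine (mu B))%:E * mu C)%E.
Proof.
move=> mC.
pose r : {nonneg R} := NngNum fineB_ge0.
apply: (@measure_unique _ R MT (@measurable _ (CT gT)) (fun _ => setT) (@measT_eq gT)
  (@measurableI _ (CT gT)) _ _ (mrestr mu mB) (mscale r mu)) => //.
- by apply/seteqP; split => // x _; exists 0%N.
- move=> D [n Dn]; change (mu (D `&` B) = (r%:num)%:E * mu D)%E.
  by rewrite setIC; exact: (claimC Dn).
- move=> k; change (mu (setT `&` B) < +oo)%E; rewrite setTI (mu_fin mB); exact: ltry.
Qed.

Lemma zero_one : fine (mu B) = 0 \/ fine (mu B) = 1.
Proof.
have := zero_one_all mB; rewrite setIid; set x := fine (mu B).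
rewrite (mu_fin mB) -/x -EFinM => -[] h.
have : x * (x - 1) = 0 by rewrite mulrBr mulr1 -h subrr.
move/eqP; rewrite mulf_eq0 subr_eq0 => /orP[/eqP|/eqP]; tauto.
Qed.

End NonMeas.

End M8.
Import M8.

Module M9.
Set Implicit Arguments. Unset Strict Implicit. Unset Printing Implicit Defensive.
Import Order.TTheory GRing.Theory Num.Theory.
Local Open Scope classical_set_scope.
Local Open Scope ring_scope.

Section Contra.
Variable gT : finGroupType.
Variable R : realType.
Local Notation q := #|gT|.
Local Notation MT := (MT gT).
Local Notation G := (cantor_group gT).
Local Notation mu := (muG gT R).

Variable H : set G.
Hypothesis hF3 : forall z : G, finsupp z -> forall x, H (gmul x z) <-> H x.
Hypothesis hF1 : forall x : G, exists g : gT, H (gmul x (fun _ => g)).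
Variable a : gT.
Hypothesis hF2 : forall x, H x -> H (gmul x (fun _ => a)) -> False.

Variable B : set MT.
Hypothesis mB : measurable B.
Variable N0 : set MT.
Hypothesis mN0 : measurable N0.
Hypothesis muN0 : mu N0 = 0%E.
Hypothesis sN0 : (H `\` B) `|` (B `\` H) `<=` N0.

Let cst (g : gT) : G := fun _ => g.

Lemma cover_mu0 (s : seq gT) (F : gT -> set MT) :
  (forall g, measurable (F g) /\ mu (F g) = 0%E) ->
  measurable (\big[setU/set0]_(g <- s) F g) /\ mu (\big[setU/set0]_(g <- s) F g) = 0%E.
Proof.
move=> h; elim: s => [|g s [mS muS]]; first by rewrite big_nil; split; [exact: measurable0|exact: measure0].
rewrite big_cons; have [mA muA] := h g.
by split; [exact: measurableU|exact: mu0U].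
Qed.

Lemma in_cover (s : seq gT) (F : gT -> set MT) g x : g \in s -> F g x ->
  (\big[setU/set0]_(g <- s) F g) x.
Proof.
elim: s => [//|g' s IH]; rewrite in_cons => /orP[/eqP ->|gs] Fx; rewrite big_cons; first by left.
by right; exact: IH.
Qed.

Lemma not_zero : fine (mu B) <> 0.
Proof.
move=> h0.
have muB : mu B = 0%E by rewrite (mu_fin R mB) h0.
pose F g := tau (cst g) @^-1` B `|` tau (cst g) @^-1` N0.
have [mS muS] := @cover_mu0 (enum gT) F (fun g => conj
  (measurableU _ _ (tau_measP (cst g) mB) (tau_measP (cst g) mN0))
  (mu0U (tau_measP (cst g) mB) (tau_measP (cst g) mN0)
     (etrans (@mu_tau _ R _ _ mB) muB) (etrans (@mu_tau _ R _ _ mN0) muN0))).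
have : (mu setT <= mu (\big[setU/set0]_(g <- enum gT) F g))%E.
  apply: le_measure; rewrite ?inE //.
  move=> x _; have [g Hg] := hF1 x.
  apply: (@in_cover _ F g); first by rewrite mem_enum.
  case: (pselect (B (tau (cst g) x))) => Bx; [by left|right].
  by apply: sN0; left.
by rewrite muS mu_setT lee_fin ler10.
Qed.

Lemma not_one : fine (mu B) <> 1.
Proof.
move=> h1.
have muB : mu B = 1%E by rewrite (mu_fin R mB) h1.
have mCB : measurable (~` B) by exact: measurableC.
have muCB : mu (~` B) = 0%E.
  have e : (mu (B `|` ~` B) = mu B + mu (~` B))%E := @measureU _ _ _ mu B (~` B) mB mCB (setICr B).
  move: e; rewrite setUCr mu_setT muB (mu_fin R mCB) -EFinD => -[] h.
  by rewrite (mu_fin R mCB); congr (_%:E); lra.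
have mt1 := tau_measP (cst a) mCB; have mt2 := tau_measP (cst a) mN0.
have mu1 : mu (tau (cst a) @^-1` (~` B)) = 0%E by rewrite (@mu_tau _ R _ _ mCB).
have mu2 : mu (tau (cst a) @^-1` N0) = 0%E by rewrite (@mu_tau _ R _ _ mN0).
have mU1 := measurableU _ _ mCB mt1; have mU2 := measurableU _ _ mN0 mt2.
have muU := mu0U mU1 mU2 (mu0U mCB mt1 muCB mu1) (mu0U mN0 mt2 muN0 mu2).
have : (mu setT <= mu ((~` B `|` tau (cst a) @^-1` (~` B)) `|` (N0 `|` tau (cst a) @^-1` N0)))%E.
  apply: le_measure; rewrite ?inE //; first exact: measurableU.
  move=> x _.
  case: (pselect (B x)) => Bx; last by left; left.
  case: (pselect (B (tau (cst a) x))) => Bxa; last by left; right.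
  right; case: (pselect (H x)) => Hx; last by left; apply: sN0; right.
  right; apply: sN0; right; split => //.
  by move=> Hxa; apply: (hF2 Hx Hxa).
by rewrite muU mu_setT lee_fin ler10.
Qed.

End Contra.

End M9.
Import M9.

Module M10.
Set Implicit Arguments. Unset Strict Implicit. Unset Printing Implicit Defensive.
Import Order.TTheory GRing.Theory Num.Theory.
Local Open Scope classical_set_scope.

Section Final.
Variable gT : finGroupType.
Local Notation G := (cantor_group gT).

Lemma non_meas (H : set G) (a : gT) :
  (forall z : G, finsupp z -> forall x, H (gmul x z) <-> H x) ->
  (forall x : G, exists g : gT, H (gmul x (fun _ => g))) ->
  (forall x, H x -> H (gmul x (fun _ => a)) -> False) ->
  ~ haar_measurable H.
Proof.
move=> hF3 hF1 hF2 [B [bB nB]].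
have mB := @borel_meas gT B bB.
have [N0 [mN0 [sN0 muN0]]] := @null_meas gT Rdefinitions.R _ nB.
have [h|h] := zero_one hF3 mB mN0 muN0 sN0.
  exact: (not_zero hF1 mB mN0 muN0 sN0 h).
exact: (not_one hF2 mB mN0 muN0 sN0 h).
Qed.

Variable U : set_system nat.
Hypothesis UU : UltraFilter U.
Hypothesis Ucof : forall m, U [set j | (m <= j)%N].

Definition Hset : set G := [set x | U [set j | x j = 1%g]].

Lemma Hset_subgroup : is_subgroup Hset.
Proof.
split; first by rewrite /Hset /gone /=; apply: filterS filterT.
split.
  move=> x y Hx Hy; apply: filterS (filterI Hx Hy) => j [/= h1 h2].
  by rewrite /gmul h1 h2 mulg1.
move=> x Hx; apply: filterS Hx => j /= xj; by rewrite /ginv xj invg1.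
Qed.

Lemma Hset_dense : dense Hset.
Proof.
move=> O [x Ox] oO.
have [n cO] := open_cyl_sub oO Ox.
pose y : G := fun i => if (i < n)%N then x i else 1%g.
exists y; split.
  by apply: cO => i ilt; rewrite /y ilt.
by apply: filterS (Ucof n) => j /= nj; rewrite /y ltnNge nj.
Qed.

Lemma Hset_F3 (z : G) : finsupp z -> forall x, Hset (gmul x z) <-> Hset x.
Proof.
move=> [n zn] x; split => Hx.
  by apply: filterS (filterI Hx (Ucof n)) => j [/= h nj]; move: h; rewrite /gmul zn // mulg1.
by apply: filterS (filterI Hx (Ucof n)) => j [/= h nj]; rewrite /gmul zn // mulg1.
Qed.

Lemma ultra_fin (x : G) : exists g : gT, U [set j | x j = g].
Proof.
apply: contrapT => nE.
have nU g : U (~` [set j | x j = g]).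
  have [h|//] := in_ultra_setVsetC [set j | x j = g] UU.
  by exfalso; apply: nE; exists g.
suff : forall s : seq gT, U [set j | x j \notin s].
  move=> /(_ (enum gT)) h; have [j] := filter_ex h.
  by rewrite /= mem_enum.
elim => [|g0 s IH]; first by apply: filterS filterT.
apply: filterS (filterI IH (nU g0)) => j [/= h1 h2]; rewrite in_cons negb_or h1 andbT.
by apply/eqP.
Qed.

Lemma Hset_F1 (x : G) : exists g : gT, Hset (gmul x (fun _ => g)).
Proof.
have [h Uh] := ultra_fin x; exists h^-1%g.
by apply: filterS Uh => j /= xj; rewrite /gmul xj mulgV.
Qed.

Lemma Hset_F2 (a : gT) : a != 1%g -> forall x, Hset x -> Hset (gmul x (fun _ => a)) -> False.
Proof.
move=> a1 x Hx Hxa; have [j [/= h1 h2]] := filter_ex (filterI Hx Hxa).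
by move: h2; rewrite /gmul h1 mul1g => /eqP; rewrite (negbTE a1).
Qed.

End Final.

End M10.
Import M10.

Module M11.
Set Implicit Arguments. Unset Strict Implicit. Unset Printing Implicit Defensive.
Import Order.TTheory GRing.Theory Num.Theory.
Local Open Scope classical_set_scope.

Section Indep.

Definition Jt := (nat * seq (seq bool))%type.
Definition pi (j : nat) : Jt := odflt (0%N, [::]) (unpickle j).
Definition prefix (f : nat -> bool) n : seq bool := [seq f i | i <- iota 0 n].
Definition Af (f : nat -> bool) : set nat := [set j | prefix f (pi j).1 \in (pi j).2].

Lemma prefix_nth f n i : (i < n)%N -> nth false (prefix f n) i = f i.
Proof. by move=> ilt; rewrite /prefix (nth_map 0%N) ?size_iota // nth_iota. Qed.

Lemma sep1 (f : nat -> bool) fs : exists N, forall n, (N <= n)%N ->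
  forall g, List.In g fs -> prefix f n = prefix g n -> f = g.
Proof.
elim: fs => [|g fs [N HN]]; first by exists 0%N.
have [N' HN'] : exists N', forall n, (N' <= n)%N -> prefix f n = prefix g n -> f = g.
  case: (pselect (f = g)) => [fg|nfg]; first by exists 0%N.
  have [i fi] : exists i, f i <> g i.
    by apply: contrapT => h; apply: nfg; apply: funext => i; apply: contrapT => h'; apply: h; exists i.
  exists i.+1 => n ni e; exfalso; apply: fi.
  by rewrite -(prefix_nth f ni) -(prefix_nth g ni) e.
exists (maxn N N') => n; rewrite geq_max => /andP[h1 h2] g' [<-|ig].
  exact: HN'.
exact: HN.
Qed.

Lemma sep fs : exists N, forall n, (N <= n)%N -> forall f g,
  List.In f fs -> List.In g fs -> prefix f n = prefix g n -> f = g.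
Proof.
elim: fs => [|f fs [N HN]]; first by exists 0%N.
have [N' HN'] := sep1 f fs.
exists (maxn N N') => n; rewrite geq_max => /andP[h1 h2] f1 g1 [<-|i1] [<-|i2] e //.
- exact: (HN' n h2 _ i2 e).
- by symmetry; apply: (HN' n h2 _ i1); symmetry.
- exact: (HN n h1 _ _ i1 i2 e).
Qed.

Variable P : set (nat -> bool).

Definition Lof n (fs : seq (nat -> bool)) : seq (seq bool) :=
  [seq prefix f n | f <- seq.filter (fun f => `[< P f >]) fs].

Lemma memL n fs s : s \in Lof n fs <-> exists g, List.In g fs /\ P g /\ prefix g n = s.
Proof.
elim: fs => [|f fs IH] /=; first by split => // -[g []].
rewrite /Lof /=; case: (asboolP (P f)) => Pf /=.
  rewrite in_cons; split.
    move=> /orP[/eqP ->|/IH [g [ig [Pg e]]]]; first by exists f; split; [left|].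
    by exists g; split; [right|].
  move=> [g [[<-|ig] [Pg e]]]; first by rewrite e eqxx.
  by apply/orP; right; apply/IH; exists g.
split; first by move=> /IH [g [ig [Pg e]]]; exists g; split; [right|].
move=> [g [[<-|ig] [Pg e]]] //; by apply/IH; exists g.
Qed.

Lemma key fs m : exists j, (m <= j)%N /\ forall f, List.In f fs -> (Af f j <-> P f).
Proof.
have [N HN] := sep fs.
pose xk k : Jt := ((N + k)%N, Lof (N + k) fs).
have [k mk] : exists k, (m <= pickle (xk k))%N.
  apply: contrapT => nk.
  have lt k : (pickle (xk k) < m)%N by rewrite ltnNge; apply/negP => h; apply: nk; exists k.
  pose h (i : 'I_m.+1) : 'I_m := Ordinal (lt i).
  have hinj : injective h.
    move=> i i' /(congr1 val) /= /(pcan_inj pickleK) [] /eqP; rewrite eqn_add2l => /eqP e.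
    by move=> _; apply: val_inj.
  by have := leq_card h hinj; rewrite !card_ord ltnn.
exists (pickle (xk k)); split => // f iff.
have ep : @unpickle Jt (pickle (xk k)) = Some (xk k) := pickleK _.
rewrite /Af /pi /= ep /=; split.
  by move=> /memL [g [ig [Pg e]]]; rewrite (HN (N + k)%N (leq_addr _ _) f g iff ig (esym e)).
by move=> Pf; apply/memL; exists f.
Qed.

Definition Base : set_system nat := [set S | exists fs m,
  [set j | (m <= j)%N /\ forall f, List.In f fs -> (Af f j <-> P f)] `<=` S].

Lemma Base_proper : ProperFilter Base.
Proof.
apply: Build_ProperFilter_ex.
  move=> S [fs [m sub]]; have [j [mj Hj]] := key fs m; exists j; exact: sub.
constructor.
- by exists [::]; exists 0%N.
- move=> S S' [fs [m sub]] [fs' [m' sub']]; exists (fs ++ fs'); exists (maxn m m').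
  move=> j [mj Hj]; rewrite geq_max in mj; case/andP: mj => mj mj'; split.
    by apply: sub; split => // f i; apply: Hj; apply: List.in_or_app; left.
  by apply: sub'; split => // f i; apply: Hj; apply: List.in_or_app; right.
- by move=> S S' SS' [fs [m sub]]; exists fs; exists m; exact: subset_trans SS'.
Qed.

Definition UF : set_system nat := projT1 (cid (ultraFilterLemma Base_proper)).

Lemma UF_ultra : UltraFilter UF.
Proof. exact: (proj1 (projT2 (cid (ultraFilterLemma Base_proper)))). Qed.

Lemma UF_base S : Base S -> UF S.
Proof. exact: (proj2 (projT2 (cid (ultraFilterLemma Base_proper)))). Qed.

Lemma UF_cof m : UF [set j | (m <= j)%N].
Proof. by apply: UF_base; exists [::]; exists m => j []. Qed.

Lemma UF_pos f : P f -> UF (Af f).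
Proof.
move=> Pf; apply: UF_base; exists [:: f]; exists 0%N => j [_ Hj].
by apply/(Hj f); [left|].
Qed.

Lemma UF_neg f : ~ P f -> UF (~` Af f).
Proof.
move=> nPf; apply: UF_base; exists [:: f]; exists 0%N => j [_ Hj] Afj.
by apply: nPf; apply/(Hj f); [left|].
Qed.

End Indep.

End M11.
Import M11.

Module M12.
Local Open Scope classical_set_scope.

Lemma sepPQ (gT : finGroupType) (a : gT) (a1 : a != 1%g) (P Q : set (nat -> bool)) f :
  P f -> ~ Q f -> Hset (UF P) <> (Hset (UF Q) : set (cantor_group gT)).
Proof.
move=> Pf nQf e; have UP := UF_ultra P; have UQ := UF_ultra Q.
pose x : cantor_group gT := fun j => if `[< Af f j >] then 1%g else a.
have HP : Hset (UF P) x.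
  by apply: filterS (UF_pos Pf) => j Afj; rewrite /= /x asboolT.
have := HP; rewrite e => HQ.
have [j [/= h1 h2]] := filter_ex (filterI HQ (UF_neg nQf)).
move: h1; rewrite /= /x asboolF //; move/eqP; by rewrite (negbTE a1).
Qed.

Unset Implicit Arguments.
Theorem mainTheorem1_aux (gT : finGroupType) (hnt : (1 < #|gT|)%N) :
  exists F : set (nat -> bool) -> set (cantor_group gT),
    injective F /\
    forall P : set (nat -> bool),
      is_subgroup (F P) /\ dense (F P) /\ ~ haar_measurable (F P).
Proof.
have [a a1] : exists a : gT, a != 1%g.
  have [x [y [_ _ xy]]] := card_gt1P hnt.
  case: (eqVneq x 1%g) => [x1|x1]; last by exists x.
  by exists y; rewrite -x1 eq_sym.
exists (fun P => Hset (UF P)); split.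
  move=> P Q /= e; apply: funext => f; apply: propext; split => Hf.
    by apply: contrapT => nQ; exact: (@sepPQ gT a a1 P Q f Hf nQ e).
  by apply: contrapT => nP; exact: (@sepPQ gT a a1 Q P f Hf nP (esym e)).
move=> P; split; last split.
- exact: Hset_subgroup (UF_ultra P).
- exact: Hset_dense (UF_ultra P) (@UF_cof P).
- apply: (@non_meas gT _ a).
  + exact: Hset_F3 (UF_ultra P) (@UF_cof P).
  + exact: Hset_F1 (UF_ultra P).
  + move=> x; exact: (Hset_F2 (UF_ultra P) a1 (x:=x)).
Qed.

End M12.
Import M12.

Unset Implicit Arguments.
Local Open Scope classical_set_scope.
Theorem mainTheorem1 (gT : finGroupType) (hnt : (1 < #|gT|)%N) :
  exists F : set (nat -> bool) -> set (cantor_group gT),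
    injective F /\
    forall P : set (nat -> bool),
      is_subgroup (F P) /\ dense (F P) /\ ~ haar_measurable (F P).
Proof. exact: (@mainTheorem1_aux gT hnt). Qed.
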